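(* Let $V=\mathbb{R}^{16}$, with coordinates indexed by $(a,b,x,y)\in\{0,1\}^4$, and let $G$ be the relabeling group of the $(2,2,2)$ Bell scenario acting on $V$ (defined in the context). Define the subspaces $V_{\mathrm{NO}_1}=\operatorname{span}\{\vec Q_{++++}\}$, $V_{\mathrm{NO}_2}=\operatorname{span}\{\vec Q_{+++-},\vec Q_{++-+}\}$, $V_{\mathrm{NO}_3}=\operatorname{span}\{\vec Q_{++--}\}$, $V_{\mathrm{marg}}=\operatorname{span}\{\vec Q_{-+++},\vec Q_{-+-+},\vec Q_{+-++},\vec Q_{+-+-}\}$, $V_{\mathrm{corr}}=\operatorname{span}\{\vec Q_{--++},\vec Q_{--+-},\vec Q_{---+},\vec Q_{----}\}$, $V_{\mathrm{SI}}=\operatorname{span}\{\vec Q_{+--+},\vec Q_{+---},\vec Q_{-++-},\vec Q_{-+--}\}$. Then $V=V_{\mathrm{NO}_1}\oplus V_{\mathrm{NO}_2}\oplus V_{\mathrm{NO}_3}\oplus V_{\mathrm{marg}}\oplus V_{\mathrm{corr}}\oplus V_{\mathrm{SI}}$, these six subspaces are mutually orthogonal, each is $G$-invariant and is an irreducible representation of $G$, and the six representations are pairwise nonequivalent. Consequently this is the unique decomposition of $V$ into $G$-irreducible subspaces (the finest $G$-invariant decomposition), and for every $g\in G$ and $\vec P\in V$ the component of $g\vec P$ in each of these subspaces is $g$ applied to the component of $\vec P$ in that subspace.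
   Context: For $i,j,k,l\in\{+1,-1\}$ (written $\pm$), $\vec Q_{ijkl}\in V$ is the vector with entries $Q_{ijkl}(ab|xy)=i^a j^b k^x l^y$. The relabeling group $G$ is the group of permutations of the index set $\{0,1\}^4$ (acting on $V$ by permuting coordinates, $(g\vec P)(g(a,b,x,y))=P(a,b,x,y)$) generated by: flipping Alice's outcome $a\mapsto 1-a$ only for indices with a given value of $x$ (for each $x\in\{0,1\}$); flipping Bob's outcome $b\mapsto 1-b$ only for indices with a given value of $y$; flipping Alice's setting $x\mapsto 1-x$; flipping Bob's setting $y\mapsto 1-y$; and exchanging the parties $(a,b,x,y)\mapsto(b,a,y,x)$. It is the wreath product $(\mathfrak S_2\wr\mathfrak S_2)\wr\mathfrak S_2$, of order 128. *)

(* Defs.v *)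
From HB Require Import structures.
From mathcomp Require Import all_boot all_algebra all_fingroup.
From mathcomp Require Import mxrepresentation.
From mathcomp Require Import reals.
Set Implicit Arguments. Unset Strict Implicit. Unset Printing Implicit Defensive.
Import GRing.Theory Num.Theory.
Local Open Scope ring_scope.

(** Index set {0,1}^4 of tuples (a,b,x,y); [false] = 0, [true] = 1. *)
Definition T4 : finType := (bool * bool * bool * bool)%type.

Definition n4 : nat := #|{: T4}|.

Definition idx (c : 'I_n4) : T4 := enum_val (c : 'I_#|{: T4}|).
Definition rnk (t : T4) : 'I_n4 := enum_rank t.

Lemma idxK : cancel idx rnk.
Proof. by move=> c; rewrite /idx /rnk enum_valK. Qed.
Lemma rnkK : cancel rnk idx.
Proof. by move=> t; rewrite /idx /rnk enum_rankK. Qed.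

Definition transp (f : T4 -> T4) (c : 'I_n4) : 'I_n4 := rnk (f (idx c)).

Lemma transp_inj (f : T4 -> T4) : involutive f -> injective (transp f).
Proof.
move=> fK; apply: (can_inj (g := transp f)) => c.
by rewrite /transp rnkK fK idxK.
Qed.

Definition flipA (x0 : bool) (t : T4) : T4 :=
  let: (a, b, x, y) := t in (if x == x0 then ~~ a else a, b, x, y).
Definition flipB (y0 : bool) (t : T4) : T4 :=
  let: (a, b, x, y) := t in (a, if y == y0 then ~~ b else b, x, y).
Definition flipX (t : T4) : T4 := let: (a, b, x, y) := t in (a, b, ~~ x, y).
Definition flipY (t : T4) : T4 := let: (a, b, x, y) := t in (a, b, x, ~~ y).
Definition swapAB (t : T4) : T4 := let: (a, b, x, y) := t in (b, a, y, x).

Lemma flipA_inv x0 : involutive (flipA x0).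
Proof. by case=> [[[a b] x] y] /=; case: (x == x0); rewrite ?negbK. Qed.
Lemma flipB_inv y0 : involutive (flipB y0).
Proof. by case=> [[[a b] x] y] /=; case: (y == y0); rewrite ?negbK. Qed.
Lemma flipX_inv : involutive flipX.
Proof. by case=> [[[a b] x] y] /=; rewrite negbK. Qed.
Lemma flipY_inv : involutive flipY.
Proof. by case=> [[[a b] x] y] /=; rewrite negbK. Qed.
Lemma swapAB_inv : involutive swapAB.
Proof. by case=> [[[a b] x] y]. Qed.

Definition gA (x0 : bool) : 'S_n4 := perm (transp_inj (flipA_inv x0)).
Definition gB (y0 : bool) : 'S_n4 := perm (transp_inj (flipB_inv y0)).
Definition gX : 'S_n4 := perm (transp_inj flipX_inv).
Definition gY : 'S_n4 := perm (transp_inj flipY_inv).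
Definition gSwap : 'S_n4 := perm (transp_inj swapAB_inv).

(** The relabeling group G (order 128), as a group of permutations of the
    coordinate index set. *)
Definition relabG : {group 'S_n4} :=
  <<[set gA false; gA true; gB false; gB true; gX; gY; gSwap]>>%G.

(** The action of G on V = 'rV[R]_n4: (g P)(g c) = P c, i.e. g P = P *m perm_mx g. *)
Lemma relab_mx_repr (R : comUnitRingType) :
  mx_repr relabG (fun g : 'S_n4 => perm_mx g : 'M[R]_n4).
Proof. by split; [exact: perm_mx1 | move=> g h _ _; exact: perm_mxM]. Qed.

Definition relabRepr (R : comUnitRingType) : mx_representation R relabG n4 :=
  MxRepresentation (relab_mx_repr R).

Definition Qv (R : comUnitRingType) (i j k l : R) : 'rV[R]_n4 :=
  \row_c (let: (a, b, x, y) := idx c in i ^+ a * j ^+ b * k ^+ x * l ^+ y).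

Section Spaces.
Variable R : realType.
Notation Q := (@Qv R).

Definition V_NO1 : 'M[R]_n4 := << Q 1 1 1 1 >>%MS.
Definition V_NO2 : 'M[R]_n4 := << col_mx (Q 1 1 1 (-1)) (Q 1 1 (-1) 1) >>%MS.
Definition V_NO3 : 'M[R]_n4 := << Q 1 1 (-1) (-1) >>%MS.
Definition V_marg : 'M[R]_n4 :=
  << col_mx (col_mx (Q (-1) 1 1 1) (Q (-1) 1 (-1) 1))
            (col_mx (Q 1 (-1) 1 1) (Q 1 (-1) 1 (-1))) >>%MS.
Definition V_corr : 'M[R]_n4 :=
  << col_mx (col_mx (Q (-1) (-1) 1 1) (Q (-1) (-1) 1 (-1)))
            (col_mx (Q (-1) (-1) (-1) 1) (Q (-1) (-1) (-1) (-1))) >>%MS.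
Definition V_SI : 'M[R]_n4 :=
  << col_mx (col_mx (Q 1 (-1) (-1) 1) (Q 1 (-1) (-1) (-1)))
            (col_mx (Q (-1) 1 1 (-1)) (Q (-1) 1 (-1) (-1))) >>%MS.
End Spaces.

Definition Wfam (R : realType) (i : 'I_6) : 'M[R]_n4 :=
  nth 0 [:: V_NO1 R; V_NO2 R; V_NO3 R; V_marg R; V_corr R; V_SI R] i.

Definition component (R : realType) (i : 'I_6) : 'M[R]_n4 :=
  proj_mx (Wfam R i) (\sum_(j < 6 | j != i) Wfam R j)%MS.

(* Main.v *)
Require Import Defs.
From HB Require Import structures.
From mathcomp Require Import all_boot all_algebra all_fingroup.
From mathcomp Require Import mxrepresentation.
From mathcomp Require Import reals.
From mathcomp Require Import ring.
Import GRing.Theory Num.Theory.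
Local Open Scope ring_scope.
Set Implicit Arguments. Unset Strict Implicit. Unset Printing Implicit Defensive.

Section S.
Variable R : realType.

Definition sgn (b : bool) : R := if b then -1 else 1.
Definition par (r t : T4) : bool :=
  let: (r1, r2, r3, r4) := r in let: (a, b, x, y) := t in
  (r1 && a) (+) (r2 && b) (+) (r3 && x) (+) (r4 && y).
Definition Qs (r : T4) : 'rV[R]_n4 :=
  let: (r1, r2, r3, r4) := r in Qv (sgn r1) (sgn r2) (sgn r3) (sgn r4).

Lemma sgnD b c : sgn (b (+) c) = sgn b * sgn c.
Proof. by case: b; case: c; rewrite /sgn /= ?mulN1r ?mul1r ?opprK. Qed.

Lemma sgnX b (a : bool) : sgn b ^+ a = sgn (b && a).
Proof. by case: a; case: b; rewrite ?expr0 ?expr1. Qed.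

Lemma QsE r c : Qs r 0 c = sgn (par r (idx c)).
Proof.
case: r => [[[r1 r2] r3] r4]; rewrite /Qs mxE.
case: (idx c) => [[[a b] x] y]; rewrite !sgnX /par !sgnD.
by [].

Qed.

Lemma perm_inv_invol (f : T4 -> T4) (fK : involutive f) c :
  (perm (transp_inj fK))^-1%g c = transp f c.
Proof.
apply: (canLR (permK _)); rewrite permE /transp rnkK fK idxK //.
Qed.

Lemma Qs_act (f : T4 -> T4) (fK : involutive f) (pi : T4 -> T4) (e : T4 -> bool) r :
  (forall t, par r (f t) = e r (+) par (pi r) t) ->
  Qs r *m perm_mx (perm (transp_inj fK)) = sgn (e r) *: Qs (pi r).
Proof.
move=> H; apply/rowP => c.
rewrite -[perm _]invgK -col_permE !mxE QsE perm_inv_invol /transp rnkK H sgnD QsE.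
by [].
Qed.
End S.
Section G.
Variable R : realType.
Notation Qs := (@Qs R).
Notation sgn := (@sgn R).

Definition piA (r : T4) : T4 := let: (r1, r2, r3, r4) := r in (r1, r2, r3 (+) r1, r4).
Definition piB (r : T4) : T4 := let: (r1, r2, r3, r4) := r in (r1, r2, r3, r4 (+) r2).
Definition piS (r : T4) : T4 := let: (r1, r2, r3, r4) := r in (r2, r1, r4, r3).
Definition c1 (r : T4) := r.1.1.1.
Definition c2 (r : T4) := r.1.1.2.
Definition c3 (r : T4) := r.1.2.
Definition c4 (r : T4) := r.2.

Ltac bcase := case=> [[[[|] [|]] [|]] [|]] [[[[|] [|]] [|]] [|]].

Lemma QgX r : Qs r *m perm_mx gX = sgn (c3 r) *: Qs r.
Proof. apply: (@Qs_act R _ flipX_inv id c3); by move: r; bcase. Qed.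
Lemma QgY r : Qs r *m perm_mx gY = sgn (c4 r) *: Qs r.
Proof. apply: (@Qs_act R _ flipY_inv id c4); by move: r; bcase. Qed.
Lemma QgA x0 r : Qs r *m perm_mx (gA x0) = sgn (c1 r && ~~ x0) *: Qs (piA r).
Proof. apply: (@Qs_act R _ (flipA_inv x0) piA (fun r => c1 r && ~~ x0)); by move: r; case: x0; bcase. Qed.
Lemma QgB y0 r : Qs r *m perm_mx (gB y0) = sgn (c2 r && ~~ y0) *: Qs (piB r).
Proof. apply: (@Qs_act R _ (flipB_inv y0) piB (fun r => c2 r && ~~ y0)); by move: r; case: y0; bcase. Qed.
Lemma QgS r : Qs r *m perm_mx gSwap = Qs (piS r).
Proof. rewrite -[Qs (piS r)]scale1r; apply: (@Qs_act R _ swapAB_inv piS (fun _ => false)); by move: r; bcase. Qed.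
End G.
Section P.
Variable R : realType.
Notation Qs := (@Qs R).
Notation sgn := (@sgn R).

Definition ta : 'S_n4 := (gA false * gA true)%g.
Definition tb : 'S_n4 := (gB false * gB true)%g.

Lemma Qta r : Qs r *m perm_mx ta = sgn (c1 r) *: Qs r.
Proof.
rewrite /ta perm_mxM mulmxA QgA -scalemxAl QgA scalerA.
by case: r => [[[[|] r2] [|]] r4] /=; rewrite /sgn /= ?mul1r ?mulr1.
Qed.
Lemma Qtb r : Qs r *m perm_mx tb = sgn (c2 r) *: Qs r.
Proof.
rewrite /tb perm_mxM mulmxA QgB -scalemxAl QgB scalerA.
by case: r => [[[r1 [|]] r3] [|]] /=; rewrite /sgn /= ?mul1r ?mulr1.
Qed.

Definition Pf (e : R) (T : 'M[R]_n4) : 'M[R]_n4 := 2^-1 *: (1%:M + e *: T).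

Lemma half_eq (b b' : bool) : 2^-1 * (1 + sgn b * sgn b') = (b == b')%:R.
Proof. by case: b; case: b'; rewrite /sgn /=; field. Qed.

Lemma QPf m (v : 'M[R]_(m, n4)) T b b' : v *m T = sgn b' *: v ->
  v *m Pf (sgn b) T = if b == b' then v else 0.
Proof.
move=> H; rewrite /Pf -scalemxAr mulmxDr mulmx1 -scalemxAr H scalerA.
rewrite -[X in X + _]scale1r -scalerDl scalerA half_eq.
by case: (b == b'); rewrite ?scale1r ?scale0r.
Qed.

Definition Proj (r : T4) : 'M[R]_n4 :=
  Pf (sgn (c1 r)) (perm_mx ta) *m Pf (sgn (c2 r)) (perm_mx tb) *m
  Pf (sgn (c3 r)) (perm_mx gX) *m Pf (sgn (c4 r)) (perm_mx gY).

Lemma QProj s r : Qs s *m Proj r = if s == r then Qs s else 0.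
Proof.
rewrite /Proj !mulmxA (QPf _ (Qta s)).
case: eqP => e1; last first.
  rewrite !mul0mx; case: eqP => // esr; case: e1; by rewrite esr.
rewrite (QPf _ (Qtb s)); case: eqP => e2; last first.
  rewrite !mul0mx; case: eqP => // esr; case: e2; by rewrite esr.
rewrite (QPf _ (QgX R s)); case: eqP => e3; last first.
  rewrite !mul0mx; case: eqP => // esr; case: e3; by rewrite esr.
rewrite (QPf _ (QgY R s)); case: eqP => e4; last first.
  case: eqP => // esr; case: e4; by rewrite esr.
move: e1 e2 e3 e4; case: s => [[[s1 s2] s3] s4]; case: r => [[[r1 r2] r3] r4].
by rewrite /c1 /c2 /c3 /c4 /= => -> -> -> ->; rewrite eqxx.
Qed.
End P.


Section O.
Variable R : realType.
Notation Qs := (@Qs R).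
Notation sgn := (@sgn R).

Lemma sum_T4 (F : T4 -> R) : \sum_(t : T4) F t =
  \sum_(a : bool) \sum_(b : bool) \sum_(x : bool) \sum_(y : bool) F (a, b, x, y).
Proof.
by rewrite !pair_bigA; apply: eq_bigr => -[[[a b] x] y] _.
Qed.

Lemma sum_sgn d : \sum_(t : T4) sgn (par d t) = if d == (false, false, false, false) then 16 else 0.
Proof.
rewrite sum_T4 !big_bool /=.
by case: d => [[[[|] [|]] [|]] [|]]; rewrite /sgn /=; ring.
Qed.
End O.
Section O2.
Variable R : realType.
Notation Qs := (@Qs R).
Notation sgn := (@sgn R).

Definition xorT (s r : T4) : T4 :=
  let: (s1, s2, s3, s4) := s in let: (r1, r2, r3, r4) := r in
  (s1 (+) r1, s2 (+) r2, s3 (+) r3, s4 (+) r4).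

Lemma andb_xorl a b c : (a (+) b) && c = (a && c) (+) (b && c).
Proof. by case: a; case: b; case: c. Qed.

Lemma xorACA a b c d : (a (+) b) (+) (c (+) d) = (a (+) c) (+) (b (+) d).
Proof. by case: a; case: b; case: c; case: d. Qed.

Lemma par_xor s r t : par (xorT s r) t = par s t (+) par r t.
Proof.
case: t => [[[a b] x] y]; case: s => [[[s1 s2] s3] s4]; case: r => [[[r1 r2] r3] r4] /=.
by rewrite !andb_xorl (xorACA (s1 && a)) (xorACA (s1 && a (+) s2 && b)) (xorACA (s1 && a (+) s2 && b (+) s3 && x)).
Qed.
End O2.
Section O3.
Variable R : realType.
Notation Qs := (@Qs R).
Notation sgn := (@sgn R).

Lemma sum_idx (F : T4 -> R) : \sum_(c < n4) F (idx c) = \sum_(t : T4) F t.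
Proof.
rewrite (reindex rnk) /=; last by exists idx => ? _; rewrite ?rnkK ?idxK.
by apply: eq_bigr => t _; rewrite rnkK.
Qed.

Lemma xorT0 s r : (xorT s r == (false, false, false, false)) = (s == r).
Proof.
by case: s => [[[[|] [|]] [|]] [|]]; case: r => [[[[|] [|]] [|]] [|]].
Qed.

Lemma Qdot s r : Qs s *m (Qs r)^T = (if s == r then 16 else 0)%:M.
Proof.
apply/matrixP => i j; rewrite !ord1 !mxE.
under eq_bigr do rewrite !mxE !QsE -sgnD -par_xor.
by rewrite (sum_idx (fun t => sgn (par (xorT s r) t))) sum_sgn xorT0 /= mulr1n.
Qed.
End O3.
Section O4.
Variable R : realType.
Notation Qs := (@Qs R).
Notation sgn := (@sgn R).

Definition Qm : 'M[R]_n4 := \matrix_(c < n4) Qs (idx c).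

Lemma rowQm c : row c Qm = Qs (idx c).
Proof. by rewrite rowK. Qed.

Lemma QmQmT : Qm *m Qm^T = 16%:M.
Proof.
apply/matrixP => c d.
have := congr1 (fun M : 'M_1 => M 0 0) (Qdot R (idx c) (idx d)).
rewrite !mxE => E.
rewrite (inj_eq (can_inj idxK)) in E.
rewrite mulr1n in E.
have -> : (16 : R) *+ (c == d) = if c == d then 16 else 0 by case: (c == d).
by rewrite -E; apply: eq_bigr => k _; rewrite !mxE.
Qed.

Lemma Qm_unit : Qm \in unitmx.
Proof.
have [] // := @mulmx1_unit _ _ Qm (16^-1 *: Qm^T).
by rewrite -scalemxAr QmQmT scale_scalar_mx mulVf // pnatr_eq0.
Qed.
End O4.
Section O5.
Variable R : realType.
Notation Qs := (@Qs R).
Notation Proj := (@Proj R).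
Notation Qm := (@Qm R).

Lemma QmProj c : Qm *m Proj (idx c) = delta_mx c c *m Qm.
Proof.
apply/row_matrixP => d; rewrite !row_mul rowQm QProj rowE mul_delta_mx_cond.
rewrite (inj_eq (can_inj idxK)); case: eqP => [->|_]; first by rewrite mulr1n -rowE rowQm.
by rewrite mulr0n mul0mx.
Qed.

Lemma sum_Proj : \sum_(c < n4) Proj (idx c) = 1%:M.
Proof.
have U := Qm_unit R.
rewrite -[LHS](mulKmx U) mulmx_sumr.
under eq_bigr do rewrite QmProj.
by rewrite -mulmx_suml -mx1_sum_delta mul1mx mulVmx.
Qed.
End O5.


Definition blkn (r : T4) : nat :=
  let: (r1, r2, r3, r4) := r in
  if ~~ r1 && ~~ r2 then (if r3 && r4 then 2 else if r3 || r4 then 1 else 0)%N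
  else if r1 && r2 then 4%N
  else if (r1 && ~~ r4) || (r2 && ~~ r3) then 3%N else 5%N.

Definition nxt (r : T4) : T4 :=
  if blkn r == 1%N then piS r
  else if blkn r == 3%N then
    (if c1 r && ~~ c3 r then piA r else if c1 r then piS r else if c4 r then piB r else piS r)
  else if blkn r == 4%N then (if c3 r == c4 r then piA r else piB r)
  else if blkn r == 5%N then
    (if c2 r && ~~ c4 r then piB r else if c2 r then piS r else if c3 r then piA r else piS r)
  else r.

Lemma reach r s : blkn r = blkn s -> s \in [:: r; nxt r; nxt (nxt r); nxt (nxt (nxt r))].
Proof.
by case: r => [[[[|] [|]] [|]] [|]]; case: s => [[[[|] [|]] [|]] [|]].
Qed.

Lemma blkn_piA r : blkn (piA r) = blkn r.
Proof. by case: r => [[[[|] [|]] [|]] [|]]. Qed.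
Lemma blkn_piB r : blkn (piB r) = blkn r.
Proof. by case: r => [[[[|] [|]] [|]] [|]]. Qed.
Lemma blkn_piS r : blkn (piS r) = blkn r.
Proof. by case: r => [[[[|] [|]] [|]] [|]]. Qed.
Lemma blkn_lt r : (blkn r < 6)%N.
Proof. by case: r => [[[[|] [|]] [|]] [|]]. Qed.

Definition blk (r : T4) : 'I_6 := Ordinal (blkn_lt r).

Lemma nxt_closed (p : T4 -> Prop) : (forall r, p r -> p (piA r) /\ p (piB r) /\ p (piS r)) ->
  forall r s, blkn r = blkn s -> p r -> p s.
Proof.
move=> H r s /reach; rewrite !inE.
have Hn x : p x -> p (nxt x).
  move=> px; have [pA [pB pS]] := H x px; rewrite /nxt.
  by do !case: ifP => _.
case/or4P => /eqP -> pr; [exact: pr | exact: Hn pr | exact: Hn (Hn _ pr) | exact: Hn (Hn _ (Hn _ pr))].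
Qed.
Section W.
Variable R : realType.
Notation Qs := (@Qs R).
Notation W := (Wfam R).

Lemma subcolL m1 m2 m3 (A : 'M[R]_(m1, n4)) (B : 'M_(m2, n4)) (C : 'M_(m3, n4)) :
  (A <= B)%MS -> (A <= col_mx B C)%MS.
Proof. by move=> sAB; rewrite -addsmxE (submx_trans sAB) ?addsmxSl. Qed.
Lemma subcolR m1 m2 m3 (A : 'M[R]_(m1, n4)) (B : 'M_(m2, n4)) (C : 'M_(m3, n4)) :
  (A <= C)%MS -> (A <= col_mx B C)%MS.
Proof. by move=> sAC; rewrite -addsmxE (submx_trans sAC) ?addsmxSr. Qed.

Ltac solveSub := first [ exact: submx_refl | (apply: subcolL; solveSub) | (apply: subcolR; solveSub)].

Lemma Q_W r : (Qs r <= W (blk r))%MS.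
Proof.
case: r => [[[[|] [|]] [|]] [|]]; rewrite /W /blk /= 
  /V_NO1 /V_NO2 /V_NO3 /V_marg /V_corr /V_SI genmxE; solveSub.
Qed.

Ltac solveH H :=
  first [ apply: (H (false,false,false,false)); by []
        | apply: (H (false,false,false,true)); by []
        | apply: (H (false,false,true,false)); by []
        | apply: (H (false,false,true,true)); by []
        | apply: (H (false,true,false,false)); by []
        | apply: (H (false,true,false,true)); by []
        | apply: (H (false,true,true,false)); by []
        | apply: (H (false,true,true,true)); by []
        | apply: (H (true,false,false,false)); by []
        | apply: (H (true,false,false,true)); by []
        | apply: (H (true,false,true,false)); by []
        | apply: (H (true,false,true,true)); by []
        | apply: (H (true,true,false,false)); by []
        | apply: (H (true,true,false,true)); by []
        | apply: (H (true,true,true,false)); by []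
        | apply: (H (true,true,true,true)); by [] ].

Lemma W_sub (j : 'I_6) p (X : 'M[R]_(n4, p)) m (M : 'M[R]_(m, p)) :
  (forall r, blkn r = j -> (Qs r *m X <= M)%MS) -> (W j *m X <= M)%MS.
Proof.
case: j => [[|[|[|[|[|[|j]]]]]] Hj] // H; rewrite /W /=
  /V_NO1 /V_NO2 /V_NO3 /V_marg /V_corr /V_SI (eqmxMr _ (genmxE _));
  rewrite ?mul_col_mx ?col_mx_sub; repeat (apply/andP; split); solveH H.
Qed.
End W.


Section M.
Variable R : realType.
Notation Qs := (@Qs R).
Notation W := (Wfam R).
Notation rG := (relabRepr R).
Notation Proj := (@Proj R).
Notation sgn := (@sgn R).

Definition gens : {set 'S_n4} := [set gA false; gA true; gB false; gB true; gX; gY; gSwap].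

Lemma gens_in g : g \in gens -> g \in relabG.
Proof. by move=> Hg; rewrite mem_gen. Qed.

Lemma gensP (P : 'S_n4 -> Prop) : P (gA false) -> P (gA true) -> P (gB false) -> P (gB true) ->
  P gX -> P gY -> P gSwap -> forall g, g \in gens -> P g.
Proof.
move=> h1 h2 h3 h4 h5 h6 h7 g; rewrite !inE.
by do ![case/orP=> [|/eqP-> //]]; move/eqP->.
Qed.

Lemma mxmodule_gens m (U : 'M[R]_(m, n4)) :
  (forall g, g \in gens -> (U *m perm_mx g <= U)%MS) -> mxmodule rG U.
Proof.
move=> H; rewrite /mxmodule /relabG gen_subG; apply/subsetP => g Hg.
by rewrite inE (gens_in Hg) /=; apply: H.
Qed.

Lemma sgn_neq0 b : sgn b != 0.
Proof. by case: b; rewrite /sgn ?oppr_eq0 oner_eq0. Qed.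

Lemma Q_Wj r (j : 'I_6) : blkn r = j -> (Qs r <= W j)%MS.
Proof. move=> e; have -> : j = blk r by apply: val_inj; rewrite /= e.
exact: Q_W. Qed.

Lemma W_module j : mxmodule rG (W j).
Proof.
apply: mxmodule_gens; apply: gensP; apply: W_sub => r Hr;
  rewrite ?QgA ?QgB ?QgX ?QgY ?QgS; rewrite ?scalemx_sub //; apply: Q_Wj;
  by rewrite ?blkn_piA ?blkn_piB ?blkn_piS.
Qed.

Lemma Qmod m (M : 'M[R]_(m, n4)) r : mxmodule rG M -> (Qs r <= M)%MS ->
  [/\ (Qs (piA r) <= M)%MS, (Qs (piB r) <= M)%MS & (Qs (piS r) <= M)%MS].
Proof.
move=> /mxmoduleP modM sQ.
have H g : g \in relabG -> (Qs r *m perm_mx g <= M)%MS.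
  by move=> Gg; apply: submx_trans (modM g Gg); apply: submxMr.
split.
- by have := H _ (gens_in (_ : gA false \in gens)); rewrite QgA (eqmx_scale _ (sgn_neq0 _)) !inE eqxx; apply.
- by have := H _ (gens_in (_ : gB false \in gens)); rewrite QgB (eqmx_scale _ (sgn_neq0 _)) !inE eqxx ?orbT; apply.
- by have := H _ (gens_in (_ : gSwap \in gens)); rewrite QgS !inE eqxx ?orbT; apply.
Qed.
End M.
Section M2.
Variable R : realType.
Notation Qs := (@Qs R).
Notation W := (Wfam R).
Notation rG := (relabRepr R).
Notation Proj := (@Proj R).
Notation sgn := (@sgn R).
Notation Qm := (@Qm R).

Lemma W_le m (M : 'M[R]_(m, n4)) r : mxmodule rG M -> (Qs r <= M)%MS -> (W (blk r) <= M)%MS.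
Proof.
move=> modM sQ; rewrite -[W _]mulmx1; apply: W_sub => s Hs; rewrite mulmx1.
apply: (nxt_closed (p := fun s => (Qs s <= M)%MS)) sQ => //.
by move=> x /(Qmod modM) [].
Qed.

Lemma Pf_sub m (M : 'M[R]_(m, n4)) e T : (M *m T <= M)%MS -> (M *m Pf e T <= M)%MS.
Proof.
move=> H; rewrite /Pf -scalemxAr mulmxDr mulmx1 -scalemxAr.
by apply: scalemx_sub; apply: addmx_sub => //; apply: scalemx_sub.
Qed.

Lemma mul_sub2 m (M : 'M[R]_(m, n4)) X Y : (M *m X <= M)%MS -> (M *m Y <= M)%MS -> (M *m (X *m Y) <= M)%MS.
Proof. by move=> hX hY; rewrite mulmxA (submx_trans (submxMr _ hX)). Qed.

Lemma Proj_module m (M : 'M[R]_(m, n4)) r : mxmodule rG M -> (M *m Proj r <= M)%MS.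
Proof.
move/mxmoduleP => modM.
have Hg g : g \in relabG -> (M *m perm_mx g <= M)%MS by move=> Gg; exact: modM g Gg.
have Ga : ta \in relabG by rewrite groupM // gens_in // !inE eqxx ?orbT.
have Gb : tb \in relabG by rewrite groupM // gens_in // !inE eqxx ?orbT.
have GX : gX \in relabG by rewrite gens_in // !inE eqxx ?orbT.
have GY : gY \in relabG by rewrite gens_in // !inE eqxx ?orbT.
by rewrite /Proj; do !apply: mul_sub2; apply: Pf_sub; apply: Hg.
Qed.

Lemma Proj_Q m (v : 'M[R]_(m, n4)) r : (v *m Proj r <= Qs r)%MS.
Proof.
have sv : (v <= Qm)%MS by apply: submx_full; rewrite row_full_unit Qm_unit.
apply: submx_trans (submxMr _ sv) _.
rewrite -[r]rnkK QmProj -(@mul_delta_mx R n4 1 n4 0 (rnk r) (rnk r)) -mulmxA -rowE rowQm.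
exact: submxMl.
Qed.

Lemma rank1_sub m (x : 'M[R]_(m, n4)) r : (x <= Qs r)%MS -> x != 0 -> (Qs r <= x)%MS.
Proof.
move=> sx nz; have := mxrank_leqif_sup sx.
have r1 : (\rank (Qs r) <= 1)%N by apply: rank_leq_row.
have r0 : (0 < \rank x)%N by rewrite lt0n mxrank_eq0.
move=> [_ <-]; apply/eqP; apply: anti_leq; rewrite mxrankS //=.
exact: leq_trans r1 r0.
Qed.

Lemma key m (M : 'M[R]_(m, n4)) r : mxmodule rG M -> M *m Proj r != 0 -> (W (blk r) <= M)%MS.
Proof.
move=> modM nz; have PM := Proj_module r modM.
exact: W_le modM (submx_trans (rank1_sub (Proj_Q M r) nz) PM).
Qed.

Lemma W_Proj0 (j : 'I_6) r : blkn r != j -> W j *m Proj r = 0.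
Proof.
move=> ne; apply/eqP; rewrite -submx0; apply: W_sub => s Hs.
rewrite QProj; case: eqP => [esr|_]; last by rewrite sub0mx.
by move: ne; rewrite -Hs esr eqxx.
Qed.

Lemma sub_W_Proj0 m (U : 'M[R]_(m, n4)) (j : 'I_6) r : (U <= W j)%MS -> blkn r != j -> U *m Proj r = 0.
Proof. by move=> /submxP [D ->] ne; rewrite -mulmxA W_Proj0 // mulmx0. Qed.

Lemma decomp m (M : 'M[R]_(m, n4)) : M = \sum_(c < n4) M *m Proj (idx c).
Proof. by rewrite -mulmx_sumr sum_Proj mulmx1. Qed.
End M2.


Section E.
Variable R : realType.
Notation Qs := (@Qs R).
Notation W := (Wfam R).
Notation rG := (relabRepr R).
Notation Proj := (@Proj R).
Notation sgn := (@sgn R).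

Definition rep (i : 'I_6) : T4 :=
  nth (false,false,false,false)
   [:: (false,false,false,false); (false,false,false,true); (false,false,true,true);
       (true,false,false,false); (true,true,false,false); (false,true,true,false)] i.

Lemma rep_blk i : blkn (rep i) = i.
Proof. by case: i => [[|[|[|[|[|[|i]]]]]] Hi]. Qed.

Lemma Qs_neq0 r : Qs r != 0.
Proof.
apply/negP => /eqP/matrixP/(_ 0 (rnk (false,false,false,false))).
rewrite QsE rnkK !mxE; case: r => [[[r1 r2] r3] r4] /=; rewrite !andbF /sgn /=.
by move/eqP; rewrite oner_eq0.
Qed.

Lemma W_neq0 i : W i != 0.
Proof.
apply/negP => /eqP W0; have := Q_Wj R (rep_blk i); rewrite W0 submx0.
by rewrite (negbTE (Qs_neq0 _)).
Qed.

Lemma nzProj m (U : 'M[R]_(m, n4)) : U != 0 -> exists r, U *m Proj r != 0.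
Proof.
move=> nz; case: (pickP (fun r => U *m Proj r != 0)) => [r Hr|H]; first by exists r.
case/eqP: nz; rewrite (decomp U) big1 // => c _; apply/eqP; by move: (H (idx c)) => /negbFE.
Qed.

Lemma sum_full : (\sum_(i < 6) W i == 1%:M)%MS.
Proof.
apply/andP; split; first exact: submx1.
rewrite [X in (X <= _)%MS](decomp 1%:M) summx_sub // => c _.
apply: submx_trans (Proj_Q _ _) _; apply: submx_trans (Q_W R _) _.
exact: (sumsmx_sup (blk (idx c))).
Qed.

Definition szW (i : 'I_6) : nat := nth 0%N [:: 1; 2; 1; 4; 4; 4]%N i.

Lemma rank_W i : (\rank (W i) <= szW i)%N.
Proof.
case: i => [[|[|[|[|[|[|i]]]]]] Hi] //; rewrite /W /szW /= 
  /V_NO1 /V_NO2 /V_NO3 /V_marg /V_corr /V_SI genmxE; exact: rank_leq_row.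
Qed.

Lemma n4E : n4 = 16%N.
Proof. by rewrite /n4 !card_prod card_bool. Qed.

Lemma W_direct : mxdirect (\sum_(i < 6) W i).
Proof.
rewrite mxdirectEgeq /= (eqmxP sum_full) mxrank1 [X in (_ <= X)%N]n4E.
apply: (@leq_trans (\sum_(i < 6) szW i)); first by apply: leq_sum => i _; apply: rank_W.
by rewrite !big_ord_recr big_ord0.
Qed.
End E.
Section E2.
Variable R : realType.
Notation Qs := (@Qs R).
Notation W := (Wfam R).
Notation rG := (relabRepr R).
Notation Proj := (@Proj R).
Notation sgn := (@sgn R).

Lemma W_orth i j : i != j -> W i *m (W j)^T = 0.
Proof.
move=> nij; apply/eqP; rewrite -submx0; apply: W_sub => r Hr.
rewrite -[Qs r *m _]trmxK trmx_mul trmxK.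
suff -> : W j *m (Qs r)^T = 0 by rewrite trmx0 sub0mx.
apply/eqP; rewrite -submx0; apply: W_sub => s Hs.
rewrite Qdot; case: eqP => [esr|_]; last by rewrite raddf0 sub0mx.
by move: nij; rewrite -(inj_eq val_inj) /= -Hr -Hs esr eqxx.
Qed.

Lemma W_simple i : mxsimple rG (W i).
Proof.
split; [exact: W_module | exact: W_neq0 |] => U modU sUW nzU.
have [r nz] := nzProj nzU.
have sW := key modU nz.
have e : blk r = i.
  apply: val_inj => /=; apply/eqP; apply: contraR nz => ne.
  by rewrite (sub_W_Proj0 sUW ne).
by rewrite -e.
Qed.

Lemma W_noniso i j : mx_iso rG (W i) (W j) -> i = j.
Proof.
case=> f fU hom eqf; apply/eqP; apply/negP => /negP nij.
set r := rep i.
have sQ : (Qs r <= W i)%MS by apply: Q_Wj; rewrite rep_blk.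
have /hom_mxP hQ := submx_trans sQ hom.
set w := Qs r *m f.
have sw : (w <= W j)%MS by rewrite -eqf /w submxMr.
have Hw g b : g \in relabG -> Qs r *m perm_mx g = sgn b *: Qs r -> w *m perm_mx g = sgn b *: w.
  by move=> Gg eg; rewrite /w -(hQ g Gg) /= eg scalemxAl.
have Ga : ta \in relabG by rewrite groupM // gens_in // !inE eqxx ?orbT.
have Gb : tb \in relabG by rewrite groupM // gens_in // !inE eqxx ?orbT.
have GX : gX \in relabG by rewrite gens_in // !inE eqxx ?orbT.
have GY : gY \in relabG by rewrite gens_in // !inE eqxx ?orbT.
have e1 : w *m Proj r = w.
  rewrite /Proj !mulmxA (QPf _ (Hw _ _ Ga (Qta R r))) eqxx (QPf _ (Hw _ _ Gb (Qtb R r))) eqxx.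
  by rewrite (QPf _ (Hw _ _ GX (QgX R r))) eqxx (QPf _ (Hw _ _ GY (QgY R r))) eqxx.
have e0 : w *m Proj r = 0.
  by apply: (sub_W_Proj0 sw); rewrite /r rep_blk (inj_eq (@ord_inj 6)).
have : Qs r = 0 by rewrite -[Qs r](mulmxK fU) -/w -e1 e0 mul0mx.
by move/eqP; rewrite (negbTE (Qs_neq0 _ _)).
Qed.
End E2.
Section E3.
Variable R : realType.
Notation Qs := (@Qs R).
Notation W := (Wfam R).
Notation rG := (relabRepr R).
Notation Proj := (@Proj R).

Lemma finest (M : 'M[R]_n4) : mxmodule rG M ->
  (M == \sum_(i in [set i | (W i <= M)%MS]) W i)%MS.
Proof.
move=> modM; apply/andP; split; last by apply/sumsmx_subP => i; rewrite inE.
rewrite [X in (X <= _)%MS](decomp M) summx_sub // => c _.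
case: (eqVneq (M *m Proj (idx c)) 0) => [->|nz]; first exact: sub0mx.
apply: submx_trans (Proj_Q _ _) _; apply: submx_trans (Q_W R _) _.
by apply: (sumsmx_sup (blk (idx c))) => //; rewrite inE key.
Qed.

Lemma simple_eqW (U : 'M[R]_n4) : mxsimple rG U -> exists i, (U == W i)%MS.
Proof.
move=> simU; have [modU nzU simU'] := simU.
have E := finest modU.
case: (pickP (fun i => i \in [set i | (W i <= U)%MS])) => [i Hi|H].
  exists i; apply/andP; split; last by move: Hi; rewrite inE.
  apply: simU' => //; [exact: W_module | by move: Hi; rewrite inE | exact: W_neq0].
case/negP: nzU; rewrite -submx0; apply: submx_trans (andP E).1 _.
by rewrite big_pred0 // => i; rewrite H.
Qed.
End E3.
Section E4.
Variable R : realType.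
Notation Qs := (@Qs R).
Notation W := (Wfam R).
Notation rG := (relabRepr R).
Notation Proj := (@Proj R).

Lemma uniq_decomp m (U : 'I_m -> 'M[R]_n4) :
  (forall k, mxsimple rG (U k)) ->
  mxdirect (\sum_(k < m) U k) -> (\sum_(k < m) U k == 1%:M)%MS ->
  exists s : 'I_m -> 'I_6, bijective s /\ forall k, (U k == W (s k))%MS.
Proof.
move=> simU dxU fullU.
pose s k := odflt ord0 [pick i | (U k == W i)%MS].
have Es k : (U k == W (s k))%MS.
  rewrite /s; case: pickP => [i -> //|H].
  by have [i Ei] := simple_eqW (simU k); move: (H i); rewrite Ei.
exists s; split=> //.
have inj_s : injective s.
  move=> k1 k2 e; apply/eqP/negP => /negP n12.
  have /mxdirect_sumsP D := dxU.
  have [_ nz _] := simU k1.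
  case/negP: nz; rewrite -submx0 -(D k1 isT) sub_capmx submx_refl /=.
  apply: (sumsmx_sup k2); first by rewrite eq_sym.
  by rewrite (eqmxP (Es k1)) e -(eqmxP (Es k2)).
have surj i : exists k, s k = i.
  case: (pickP (fun k => s k == i)) => [k /eqP <-|H]; first by exists k.
  have /mxdirect_sumsP D := W_direct R.
  have sub : (W i <= \sum_(j < 6 | true && (j != i)) W j)%MS.
    apply: submx_trans (submx1 _) _; apply: submx_trans (andP fullU).2 _.
    apply/sumsmx_subP => k _; rewrite (eqmxP (Es k)).
    by apply: (sumsmx_sup (s k)) => //; rewrite H.
  by have := W_neq0 R i; rewrite -submx0 -(D i isT) sub_capmx submx_refl sub.
apply: inj_card_bij inj_s _.
have [k0 _] := surj ord0.
pose h i := odflt k0 [pick k | s k == i].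
have hK : cancel h s.
  move=> i; rewrite /h; case: pickP => [k /eqP //|H].
  by have [k e] := surj i; move: (H k); rewrite e eqxx.
exact: leq_card (can_inj hK).
Qed.
End E4.
Section E5.
Variable R : realType.
Notation W := (Wfam R).
Notation rG := (relabRepr R).

Lemma equivar (i : 'I_6) (g : 'S_n4) (P : 'rV[R]_n4) : g \in relabG ->
  (P *m rG g) *m component R i = (P *m component R i) *m rG g.
Proof.
move=> Gg; rewrite /component.
set A := W i; set B := (\sum_(j < 6 | j != i) W j)%MS.
have /mxdirect_sumsP D := W_direct R.
have dAB : (A :&: B = 0)%MS := D i isT.
have full : (1%:M <= A + B)%MS.
  by have := andP (sum_full R); rewrite (bigD1 i) //= => -[].
have modA : mxmodule rG A by exact: W_module.
have modB : mxmodule rG B by apply: sumsmx_module => j _; exact: W_module.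
have sP : (P <= A + B)%MS by apply: submx_trans (submx1 P) full.
have eP := add_proj_mx dAB sP.
have sb : (P *m proj_mx B A <= B)%MS by apply: proj_mx_sub.
have sa : (P *m proj_mx A B <= A)%MS by apply: proj_mx_sub.
have h1 : P *m proj_mx B A *m rG g *m proj_mx A B = 0.
  apply: (proj_mx_0 dAB).
  apply: submx_trans (submxMr _ sb) _; exact: (mxmoduleP modB g Gg).
have h2 : P *m proj_mx A B *m rG g *m proj_mx A B = P *m proj_mx A B *m rG g.
  apply: (proj_mx_id dAB).
  apply: submx_trans (submxMr _ sa) _; exact: (mxmoduleP modA g Gg).
by rewrite -[in LHS]eP !mulmxDl h1 h2 addr0.
Qed.
End E5.

Unset Implicit Arguments.

Theorem mainTheorem2 (R : realType) :
  let rG := relabRepr R in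
  (* V is the sum of the six subspaces, and the sum is direct *)
      (\sum_(i < 6) Wfam R i == 1%:M)%MS /\
      mxdirect (\sum_(i < 6) Wfam R i) /\
      (* mutual orthogonality *)
      (forall i j : 'I_6, i != j -> Wfam R i *m (Wfam R j)^T = 0) /\
      (* each is G-invariant and an irreducible representation of G *)
      (forall i : 'I_6, mxmodule rG (Wfam R i) /\ mxsimple rG (Wfam R i)) /\
      (* pairwise nonequivalent *)
      (forall i j : 'I_6, mx_iso rG (Wfam R i) (Wfam R j) -> i = j) /\
      (* uniqueness of the decomposition into G-irreducible subspaces *)
      (forall (m : nat) (U : 'I_m -> 'M[R]_n4),
         (forall k, mxsimple rG (U k)) ->
         mxdirect (\sum_(k < m) U k) -> (\sum_(k < m) U k == 1%:M)%MS ->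
         exists s : 'I_m -> 'I_6,
           bijective s /\ forall k, (U k == Wfam R (s k))%MS) /\
      (* finest: every G-invariant decomposition is coarser *)
      (forall (m : nat) (U : 'I_m -> 'M[R]_n4),
         (forall k, mxmodule rG (U k)) ->
         mxdirect (\sum_(k < m) U k) -> (\sum_(k < m) U k == 1%:M)%MS ->
         forall k, exists S : {set 'I_6},
           (U k == \sum_(i in S) Wfam R i)%MS) /\
      (* equivariance of the components *)
      (forall (i : 'I_6) (g : 'S_n4) (P : 'rV[R]_n4), g \in relabG ->
         (P *m rG g) *m component R i = (P *m component R i) *m rG g).
Proof.
move=> rG.
split; first exact: sum_full.
split; first exact: W_direct.
split; first exact: W_orth.
split; first by move=> i; split; [exact: W_module | exact: W_simple].
split; first exact: W_noniso.
split; first exact: uniq_decomp.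
split; first by move=> m U modU _ _ k; exists [set i | (Wfam R i <= U k)%MS]; exact: finest.
by move=> i g P Gg; exact: equivar.
Qed.
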